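(* Let $E=\mathbb{Q}(i,\sqrt5)$, let $\tau=(1+\sqrt5)/2$, and let $\sigma$ be the automorphism of $E$ with $\sigma(i)=i$ and $\sigma(\sqrt5)=-\sqrt5$. For a real number $N\ge 1$ let $\mathbf{L}(N)$ be the set of numbers $x=(a+bi)+(c+di)\tau\in E$ with $a,b,c,d\in\mathbb{Z}$ and $|a|,|b|,|c|,|d|\le N$. For $x_1,x_2\in E$ put $$X(x_1,x_2)=\begin{pmatrix} x_1 & \sigma(x_1)\\ i\,x_2 & \sigma(x_2)\end{pmatrix},$$ and define the decay function $$D(N_1,N_2)=\min_{x_1\in\mathbf{L}(N_1)\setminus\{0\},\ x_2\in\mathbf{L}(N_2)\setminus\{0\}}\left|\det X(x_1,x_2)\right|.$$ Then there exists a constant $K>0$ such that for all sufficiently large $N_1,N_2$, $$D(N_1,N_2)\ge\frac{K}{N_1N_2}.$$ In particular, $D(N,N)\ge K/N^2$ for all sufficiently large $N$.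
   Context: This is the two-user single-antenna Badr–Belfiore multiuser MIMO code: user 1 transmits the row $(x_1,\sigma(x_1))$ and user 2 the row $(i x_2,\sigma(x_2))$; the determinant $\det X(x_1,x_2)$ is nonzero whenever $x_1\neq 0$ and $x_2\neq0$, so $D$ takes positive values. *)

(* Defs.v *)
(* E = Q(i, sqrt 5) is realised inside the complex numbers
   R[i] over an arbitrary real closed field R (e.g. the reals). *)
From HB Require Import structures.
From mathcomp Require Import all_boot all_order all_algebra.
From mathcomp Require Import complex.
Set Implicit Arguments. Unset Strict Implicit. Unset Printing Implicit Defensive.
Import Order.TTheory GRing.Theory Num.Theory.
Local Open Scope ring_scope.
Local Open Scope complex_scope.

Section BB.
Variable R : rcfType.

Definition sqrt5 : R := Num.sqrt 5.
Definition tau : R[i] := ((1 + sqrt5) / 2)%:C.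
Definition tau_conj : R[i] := ((1 - sqrt5) / 2)%:C.

Definition eltE (a b c d : int) : R[i] :=
  (a%:~R +i* b%:~R) + (c%:~R +i* d%:~R) * tau.

(* sigma(x) where sigma fixes i and sends sqrt 5 to - sqrt 5,
   i.e. sigma(tau) = (1 - sqrt 5)/2 *)
Definition sigma_eltE (a b c d : int) : R[i] :=
  (a%:~R +i* b%:~R) + (c%:~R +i* d%:~R) * tau_conj.

Definition in_box (N : R) (a b c d : int) : Prop :=
  (`|a|%:~R <= N) /\ (`|b|%:~R <= N) /\ (`|c|%:~R <= N) /\ (`|d|%:~R <= N).

Definition detX (x1 sx1 x2 sx2 : R[i]) : R[i] := x1 * sx2 - ('i * x2) * sx1.

Definition cmod (z : R[i]) : R := Normc.normc z.
End BB.

(* Main.v *)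
Require Import Defs.
From HB Require Import structures.
From mathcomp Require Import all_boot all_order all_algebra.
From mathcomp Require Import complex.
From mathcomp Require Import zify ring lra.
Import Order.TTheory GRing.Theory Num.Theory.
Local Open Scope ring_scope.
Local Open Scope complex_scope.

Lemma nat_irr (u v : nat) : (u * u = 5 * (v * v))%N -> v = 0%N.
Proof.
move=> h; have [//|vp] := posnP v.
have up : (0 < u)%N.
  have [u0|//] := posnP u; move: h; rewrite u0 /=; lia.
have e1 : logn 5 (u*u) = (logn 5 u + logn 5 u)%N by rewrite lognM.
have e2 : logn 5 (5*(v*v)) = (1 + (logn 5 v + logn 5 v))%N.
  by rewrite lognM ?muln_gt0 ?vp // lognM.
have := congr1 (logn 5) h; rewrite e1 e2.
lia.
Qed.

Lemma int_irr (m n : int) : m * m + m * n - n * n = 0 -> n = 0.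
Proof.
move=> h.
have h2 : (2 * m + n) * (2 * m + n) = 5 * (n * n) by rewrite -[LHS]subr0 -(mulr0 4) -h; ring.
move: h2; set w := 2 * m + n => h2.
have : (`|w| * `|w| = 5 * (`|n| * `|n|))%N.
  nia.
by move/nat_irr => /eqP; rewrite absz_eq0 => /eqP.
Qed.

Section S.
Variable R : rcfType.

Definition tr : R := (1 + sqrt5 R) / 2.
Definition tr' : R := (1 - sqrt5 R) / 2.

Lemma s5 : sqrt5 R ^+ 2 = 5.
Proof. by rewrite /sqrt5 sqr_sqrtr // ler0n. Qed.

Lemma s5ge0 : 0 <= sqrt5 R.
Proof. exact: sqrtr_ge0. Qed.

Lemma trS : tr + tr' = 1.
Proof. rewrite /tr /tr'; field; rewrite ?pnatr_eq0 ?mulf_neq0 ?pnatr_eq0 //=. Qed.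

Lemma trM : tr * tr' = -1.
Proof.
have -> : tr * tr' = (1 - sqrt5 R ^+ 2) / 4 by rewrite /tr /tr'; field; rewrite ?pnatr_eq0 ?mulf_neq0 ?pnatr_eq0 //=.
rewrite s5; field; rewrite ?pnatr_eq0 ?mulf_neq0 ?pnatr_eq0 //=.
Qed.

Lemma tr_le2 : `|tr| <= 2 /\ `|tr'| <= 2.
Proof.
have h0 := s5ge0; have h5 := s5.
have h3 : sqrt5 R <= 3 by nra.
rewrite /tr /tr' !ler_norml; split; apply/andP; split; lra.
Qed.

Lemma tauE : tau R = tr%:C. Proof. by []. Qed.
Lemma tauE' : tau_conj R = tr'%:C. Proof. by []. Qed.

Lemma tauS : tau R + tau_conj R = 1.
Proof. by rewrite tauE tauE' -rmorphD /= trS. Qed.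

Lemma tauM : tau R * tau_conj R = -1.
Proof. by rewrite tauE tauE' -rmorphM /= trM rmorphN rmorph1. Qed.

Lemma L1 (t t' : R) : t + t' = 1 -> t * t' = -1 ->
  forall m n : int, m%:~R + n%:~R * t = 0 -> m = 0 /\ n = 0.
Proof.
move=> h1 h2 m n h.
have E : (m%:~R + n%:~R * t) * (m%:~R + n%:~R * t') = (m * m + m * n - n * n)%:~R :> R.
  rewrite [RHS]intrB [in RHS]intrD !(intrM R m) (intrM R n).
  transitivity (m%:~R * m%:~R + m%:~R * n%:~R * (t + t') + n%:~R * n%:~R * (t * t') : R).
    by ring.
  by rewrite h1 h2; ring.
move: E; rewrite h mul0r => /esym/eqP; rewrite intr_eq0 => /eqP/int_irr n0.
split=> //; move: h; rewrite n0 mul0r addr0 => /eqP; rewrite intr_eq0 => /eqP //.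
Qed.

Definition GI (z : R[i]) := exists m n : int, z = (m%:~R +i* n%:~R).

Lemma GI_add x y : GI x -> GI y -> GI (x + y).
Proof.
move=> [m1 [n1 ->]] [m2 [n2 ->]]; exists (m1 + m2), (n1 + n2).
by apply/eqP; rewrite eq_complex /= (intrD R m1 m2) (intrD R n1 n2) !eqxx.
Qed.

Lemma GI_opp x : GI x -> GI (- x).
Proof.
move=> [m1 [n1 ->]]; exists (- m1), (- n1).
by apply/eqP; rewrite eq_complex /= (intrN R m1) (intrN R n1) !eqxx.
Qed.

Lemma GI_mul x y : GI x -> GI y -> GI (x * y).
Proof.
move=> [m1 [n1 ->]] [m2 [n2 ->]]; exists (m1 * m2 - n1 * n2), (m1 * n2 + n1 * m2).
apply/eqP; rewrite eq_complex /= (intrD R (m1 * n2)) (intrB R (m1 * m2)) (intrM R m1 m2) (intrM R n1 n2) (intrM R m1 n2) (intrM R n1 m2).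
by apply/andP; split; apply/eqP; ring.
Qed.

Lemma GI_i : GI 'i%C.
Proof. by exists 0, 1. Qed.

Lemma GI_1 : GI 1.
Proof. by exists 1, 0. Qed.

Lemma L2 (t t' : R) : t + t' = 1 -> t * t' = -1 ->
  forall A B, GI A -> GI B -> A + B * t%:C = 0 -> A = 0 /\ B = 0.
Proof.
move=> h1 h2 A B [a [b ->]] [c [d ->]] /eqP.
rewrite eq_complex /= => /andP[/eqP e1 /eqP e2].
rewrite mulr0 subr0 in e1; rewrite mulr0 add0r in e2.
have [-> ->] := L1 _ _ h1 h2 _ _ e1; have [-> ->] := L1 _ _ h1 h2 _ _ e2.
by split.
Qed.

End S.
Arguments GI {R}.
Arguments L2 {R t t'}.
Arguments L1 {R t t'}.
Arguments GI_add {R x y}. Arguments GI_mul {R x y}. Arguments GI_opp {R x}.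
Arguments GI_i {R}. Arguments GI_1 {R}.

Lemma det_ident (S : comNzRingType) (j t t' P1 Q1 P2 Q2 : S) : t + t' = 1 -> t * t' = -1 ->
 (P1 + Q1 * t) * (P2 + Q2 * t') - j * (P2 + Q2 * t) * (P1 + Q1 * t') =
 ((1 - j) * (P1 * P2 - Q1 * Q2) + P1 * Q2 - j * P2 * Q1) + ((1 + j) * (Q1 * P2 - P1 * Q2)) * t.
Proof.
move=> h1 h2.
have et : t' = 1 - t by rewrite -h1 addrC addKr.
have h3 : t * (1 - t) = -1 by rewrite -et.
rewrite et.
transitivity (((1 - j) * (P1 * P2 - Q1 * Q2) + P1 * Q2 - j * P2 * Q1) + ((1 + j) * (Q1 * P2 - P1 * Q2)) * t + (1 - j) * Q1 * Q2 * (t * (1 - t) + 1)).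
  by ring.
by rewrite h3 addNr mulr0 addr0.
Qed.

Section M.
Variable R : rcfType.
Local Notation T := (tau R).
Local Notation T' := (tau_conj R).

Lemma GI_norm (M : R[i]) : GI M -> M != 0 -> 1 <= Normc.normc M.
Proof.
move=> [m [n ->]] nz.
rewrite /= -{1}sqrtr1 ler_sqrt; last by apply: addr_ge0; apply: sqr_ge0.
have hi : (1 <= m * m + n * n)%R.
  have : (m != 0) || (n != 0).
    case: eqP => [m0|//]; case: eqP => [n0|//] /=; move: nz; rewrite m0 n0 /=.
    by rewrite eqxx.
  case/orP => /eqP h; nia.
move: hi; rewrite -(ler_int R) (intrD R) (intrM R m m) (intrM R n n) => h.
by rewrite !expr2.
Qed.

Lemma nc_ri (x y : R) : Normc.normc (x +i* y) <= `|x| + `|y|.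
Proof.
have e : `|x| + `|y| = Num.sqrt ((`|x| + `|y|) ^+ 2).
  by rewrite sqrtr_sqr (ger0_norm (addr_ge0 (normr_ge0 x) (normr_ge0 y))).
rewrite /= e ler_sqrt ?sqr_ge0 //.
have hx : `|x| ^+ 2 = x ^+ 2 by rewrite real_normK ?num_real.
have hy : `|y| ^+ 2 = y ^+ 2 by rewrite real_normK ?num_real.
rewrite sqrrD hx hy; have := mulr_ge0 (normr_ge0 x) (normr_ge0 y); rewrite mulr2n; lra.
Qed.

Lemma nc_real (t : R) : Normc.normc (t%:C) = `|t|.
Proof. by rewrite /= expr0n addr0 sqrtr_sqr. Qed.

Lemma nc_i : Normc.normc ('i%C : R[i]) = 1.
Proof. by rewrite /= expr0n add0r expr1n sqrtr1. Qed.

Lemma nc_ge0 (z : R[i]) : 0 <= Normc.normc z.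
Proof. by case: z => x y; rewrite /= sqrtr_ge0. Qed.

Lemma nc_elt (a b c d : int) (t N : R) : `|t| <= 2 -> in_box N a b c d ->
  Normc.normc ((a%:~R +i* b%:~R) + (c%:~R +i* d%:~R) * t%:C) <= 6 * N.
Proof.
move=> ht [ha [hb [hc hd]]].
rewrite !intr_norm in ha hb hc hd.
apply: le_trans (le_normcD _ _) _.
rewrite Normc.normcM nc_real.
have h1 := nc_ri (a%:~R) (b%:~R); have h2 := nc_ri (c%:~R) (d%:~R).
have g1 := nc_ge0 (c%:~R +i* d%:~R); have g2 := normr_ge0 t.
nra.
Qed.


Lemma tr'S : tr' R + tr R = 1. Proof. by rewrite addrC trS. Qed.
Lemma tr'M : tr' R * tr R = -1. Proof. by rewrite mulrC trM. Qed.

Ltac gi := repeat match goal with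
  | |- GI (_ + _) => apply: GI_add
  | |- GI (- _) => apply: GI_opp
  | |- GI (_ * _) => apply: GI_mul
  | |- GI 1 => exact: GI_1
  | |- GI 'i%C => exact: GI_i
  | _ => assumption
  end.

Lemma key (P1 Q1 P2 Q2 : R[i]) : GI P1 -> GI Q1 -> GI P2 -> GI Q2 ->
  P1 + Q1 * T != 0 -> P2 + Q2 * T != 0 ->
  1 <= Normc.normc (detX (P1 + Q1 * T) (P1 + Q1 * T') (P2 + Q2 * T) (P2 + Q2 * T')) *
       Normc.normc ((P1 + Q1 * T') * (P2 + Q2 * T) - 'i%C * (P2 + Q2 * T') * (P1 + Q1 * T)).
Proof.
move=> g1 g2 g3 g4 nz1 nz2.
set A := ((1 - 'i%C) * (P1 * P2 - Q1 * Q2) + P1 * Q2 - 'i%C * P2 * Q1).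
set B := ((1 + 'i%C) * (Q1 * P2 - P1 * Q2)).
have gA : GI A by rewrite /A; gi.
have gB : GI B by rewrite /B; gi.
have dE : detX (P1 + Q1 * T) (P1 + Q1 * T') (P2 + Q2 * T) (P2 + Q2 * T') = A + B * T.
  by rewrite /detX (@det_ident _ 'i%C T T' P1 Q1 P2 Q2 (tauS R) (tauM R)).
have sE : (P1 + Q1 * T') * (P2 + Q2 * T) - 'i%C * (P2 + Q2 * T') * (P1 + Q1 * T) = A + B * T'.
  have h1 : T' + T = 1 by rewrite addrC tauS.
  have h2 : T' * T = -1 by rewrite mulrC tauM.
  by rewrite (@det_ident _ 'i%C T' T P1 Q1 P2 Q2 h1 h2).
have ME : (A + B * T) * (A + B * T') = A * A + A * B - B * B.
  transitivity (A * A + A * B * (T + T') + B * B * (T * T')); first by ring.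
  by rewrite tauS tauM; ring.
rewrite -Normc.normcM dE sE ME; apply: GI_norm; first by gi.
apply/negP => /eqP M0.
have AB0 : A = 0 /\ B = 0.
  move: M0; rewrite -ME => /eqP; rewrite mulf_eq0 => /orP[/eqP h|/eqP h].
    exact: (L2 (trS R) (trM R) _ _ gA gB h).
  exact: (L2 (tr'S) (tr'M) _ _ gA gB h).
case: AB0 => A0 B0.
have d0 := dE; rewrite A0 B0 mul0r addr0 /detX in d0.
have s0 := sE; rewrite A0 B0 mul0r addr0 in s0.
move: d0 s0 nz1 nz2.
set x1 := P1 + Q1 * T; set s1 := P1 + Q1 * T'.
set x2 := P2 + Q2 * T; set s2 := P2 + Q2 * T'.
move=> d0 s0 nz1 nz2.
have E2 : x1 * s2 * (1 - 'i%C ^+ 2) = (x1 * s2 - 'i%C * x2 * s1) + 'i%C * (s1 * x2 - 'i%C * s2 * x1).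
  by ring.
rewrite d0 s0 mulr0 addr0 sqr_i opprK in E2.
move/eqP: E2; rewrite !mulf_eq0 => /orP[/orP[h|h]|h].
- by move: nz1; rewrite h.
- have [P0 Q0] := L2 (tr'S) (tr'M) _ _ g3 g4 (eqP h).
  by move: nz2; rewrite /x2 P0 Q0 mul0r addr0 eqxx.
- by move: h; rewrite -[1 + 1]/(2%:R : R[i]) pnatr_eq0.
Qed.
End M.
Arguments nc_elt {R}. Arguments nc_ge0 {R}. Arguments nc_i {R}.

Lemma GIc {R : rcfType} (m n : int) : GI (m%:~R +i* n%:~R : R[i]).
Proof. by exists m, n. Qed.

Theorem theorem2p3 (R : rcfType) :
  exists K : R, 0 < K /\
  exists N0 : R, forall N1 N2 : R, 1 <= N1 -> 1 <= N2 -> N0 <= N1 -> N0 <= N2 ->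
  forall a1 b1 c1 d1 a2 b2 c2 d2 : int,
    in_box N1 a1 b1 c1 d1 -> in_box N2 a2 b2 c2 d2 ->
    eltE R a1 b1 c1 d1 != 0 -> eltE R a2 b2 c2 d2 != 0 ->
    K / (N1 * N2) <=
      cmod (detX (eltE R a1 b1 c1 d1) (sigma_eltE R a1 b1 c1 d1)
                 (eltE R a2 b2 c2 d2) (sigma_eltE R a2 b2 c2 d2)).
Proof.
exists (1 / 72); split; first lra.
exists 1 => N1 N2 h1 h2 _ _ a1 b1 c1 d1 a2 b2 c2 d2 B1 B2 nz1 nz2.
set x1 := eltE R a1 b1 c1 d1 in nz1 *; set x2 := eltE R a2 b2 c2 d2 in nz2 *.
set s1 := sigma_eltE R a1 b1 c1 d1; set s2 := sigma_eltE R a2 b2 c2 d2.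
have K : 1 <= Normc.normc (detX x1 s1 x2 s2) * Normc.normc (s1 * x2 - 'i%C * s2 * x1)
  := @key R _ _ _ _ (GIc a1 b1) (GIc c1 d1) (GIc a2 b2) (GIc c2 d2) nz1 nz2.
have [t1 t2] := tr_le2 R.
have bx1 : Normc.normc x1 <= 6 * N1 := nc_elt _ _ _ _ _ _ t1 B1.
have bs1 : Normc.normc s1 <= 6 * N1 := nc_elt _ _ _ _ _ _ t2 B1.
have bx2 : Normc.normc x2 <= 6 * N2 := nc_elt _ _ _ _ _ _ t1 B2.
have bs2 : Normc.normc s2 <= 6 * N2 := nc_elt _ _ _ _ _ _ t2 B2.
rewrite /cmod.
have bs : Normc.normc (s1 * x2 - 'i%C * s2 * x1) <=
    Normc.normc s1 * Normc.normc x2 + Normc.normc s2 * Normc.normc x1.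
  apply: le_trans (le_normcD _ _) _.
  by rewrite normcN !Normc.normcM nc_i mul1r.
set nd := Normc.normc (detX x1 s1 x2 s2) in K *.
set ns := Normc.normc (s1 * x2 - 'i%C * s2 * x1) in K bs.
have g1 := nc_ge0 x1; have g2 := nc_ge0 x2; have g3 := nc_ge0 s1; have g4 := nc_ge0 s2.
have g5 : 0 <= nd by apply: nc_ge0.
have bns : ns <= 72 * (N1 * N2) by nra.
have pN : 0 < N1 * N2 by nra.
rewrite ler_pdivrMr //.
nra.
Qed.
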